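(* For every integer $n\ge 1$, the restriction to $\mathfrak{so}(2n+1)$ of the functional $$F_n=\sum_{i=1}^{n}\sum_{j=1}^{n+1-i}e_{i,j}^*$$ is regular on $B_n=\mathfrak{so}(2n+1)$, i.e. the kernel of its Kirillov form on $\mathfrak{so}(2n+1)$ has dimension $n$.
   Context: Over $\mathbb{C}$. $e_{i,j}^*(X)=X_{i,j}$. Here $\mathfrak{so}(2n+1)$ denotes the Lie algebra of $(2n+1)\times(2n+1)$ matrices $X$ satisfying $X_{i,j}=-X_{2n+2-j,2n+2-i}$ for all $i,j$ (skew-symmetric with respect to the antidiagonal), spanned by $e_{i,j}-e_{2n+2-j,2n+2-i}$. For $f\in\mathfrak{g}^*$, $B_f(x,y)=f([x,y])$, $\ker(B_f)=\{x\in\mathfrak{g}: f([x,y])=0\ \forall y\in\mathfrak{g}\}$, and $f$ is regular if $\dim\ker(B_f)=\operatorname{ind}\mathfrak{g}:=\min_{g\in\mathfrak{g}^*}\dim\ker(B_g)$. It is known that $\operatorname{ind}\mathfrak{so}(2n+1)=n$. *)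

(* Defs.v *)
(* The ground field C is modelled as  R[i] = complex R  for
   an arbitrary  R : realType  (every realType is a complete archimedean
   ordered field, i.e. a copy of the real numbers, so R[i] is a copy of C). *)
From HB Require Import structures.
From mathcomp Require Import all_boot all_order all_algebra.
From mathcomp Require Import reals.
From mathcomp Require Import complex.
Set Implicit Arguments. Unset Strict Implicit. Unset Printing Implicit Defensive.
Import Order.TTheory GRing.Theory Num.Theory.
Local Open Scope ring_scope.

(* Indices are 0-based: i : 'I_(2n+1) stands for the paper's index i+1.
   The paper's index 2n+2-i becomes rev_ord i (= 2n - i, 0-based). *)

Definition in_so (K : pzRingType) (n : nat) (X : 'M[K]_(n.*2.+1)) : Prop :=
  forall i j : 'I_(n.*2.+1), X i j = - X (rev_ord j) (rev_ord i).

(* F_n = sum_{i=1}^n sum_{j=1}^{n+1-i} e_{i,j}^*; in 0-based indices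
   i' = i-1, j' = j-1 the range is exactly i' + j' < n. *)
Definition Fn (K : pzRingType) (n : nat) (X : 'M[K]_(n.*2.+1)) : K :=
  \sum_(i < n.*2.+1) \sum_(j < n.*2.+1 | (i + j < n)%N) X i j.

Definition lie (K : pzRingType) (m : nat) (X Y : 'M[K]_m) : 'M[K]_m :=
  X *m Y - Y *m X.

Definition in_kirillov_ker (K : pzRingType) (n : nat)
    (f : 'M[K]_(n.*2.+1) -> K) (X : 'M[K]_(n.*2.+1)) : Prop :=
  in_so X /\ forall Y, in_so Y -> f (lie X Y) = 0.

(* Main.v *)
Require Import Defs.
From HB Require Import structures.
From mathcomp Require Import all_boot all_order all_algebra.
From mathcomp Require Import reals.
From mathcomp Require Import complex.
From mathcomp Require Import zify ring lra.
Set Implicit Arguments. Unset Strict Implicit. Unset Printing Implicit Defensive.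
Import Order.TTheory GRing.Theory Num.Theory.
Local Open Scope ring_scope.

Ltac ifs := repeat (case: ifP => [?|/negbT ?]).
Ltac ifs0 := repeat match goal with |- context [if ?c then _ else _] =>
  lazymatch c with context [inord] => fail | _ =>
    let H := fresh "H" in case H : c; [|move/negbT: H => H] end end.
Ltac solveG := ifs0; rewrite ?inordK; try lia; ifs; first [lia | ring].

Section Main.
Variable F : fieldType.
Variable n : nat.
Hypothesis hn : (0 < n)%N.
Local Notation N := n.*2.+1.
Local Notation "M @ m" := (M (inord m)) (at level 10).

Lemma sum_pick (x : 'I_N -> F) (P : bool) (m : nat) c :
  (m < N)%N ->
  \sum_(b < N) (if P && ((b : nat) == m) then c else 0) * x b
  = if P then c * x (inord m) else 0.
Proof.
move=> hm; rewrite (bigD1 (inord m)) //= big1 ?addr0.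
  by rewrite inordK // eqxx andbT; case: P => //; rewrite mul0r.
move=> b hb; case: P; rewrite ?mul0r //=.
case: eqP; rewrite ?mul0r // => e; case/eqP: hb; apply: val_inj; rewrite /= inordK //.
Qed.

Definition gf (a b : nat) : F :=
  if (a < n)%N && (b < n)%N then
    (if (a + b == n.-1)%N then 1 else if (a + b == n)%N then -1 else 0)
  else if (n < a)%N && (n < b)%N then
    (if (a + b == 3 * n)%N then 1 else if (a + b == (3 * n).+1)%N then -1 else 0)
  else 0.

Definition G : 'M[F]_N := \matrix_(a, b) gf a b.

Lemma gf_low (a b : nat) : (a < n)%N -> (b < N)%N ->
  gf a b = (if true && (b == n.-1 - a)%N then 1 else 0)
           + (if (0 < a)%N && (b == n - a)%N then -1 else 0).
Proof. move=> ha hb; rewrite /gf; ifs; first [lia | ring]. Qed.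


Lemma gf_high (a b : nat) : (n < a)%N -> (a < N)%N -> (b < N)%N ->
  gf a b = (if (a < n.*2)%N && (b == 3 * n - a)%N then 1 else 0)
           + (if true && (b == (3 * n).+1 - a)%N then -1 else 0).
Proof. move=> ha ha' hb; rewrite /gf; ifs; first [lia | ring]. Qed.

Lemma gf_mid (a b : nat) : ~~ (a < n)%N -> ~~ (n < a)%N -> gf a b = 0.
Proof. move=> h1 h2; rewrite /gf; ifs; first [lia | ring]. Qed.

Lemma gf_sym a b : gf a b = gf b a.
Proof. rewrite /gf; ifs; first [lia | ring]. Qed.

Lemma gsum (x : 'I_N -> F) (a : nat) : (a < N)%N ->
  \sum_(c < N) gf a c * x c =
  if (a < n)%N then x @ (n.-1 - a)%N - (if (0 < a)%N then x @ (n - a)%N else 0)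
  else if (n < a)%N then (if (a < n.*2)%N then x @ (3 * n - a)%N else 0) - x @ ((3 * n).+1 - a)%N
  else 0.
Proof.
move=> ha; case: ifP => [h1|/negbT h1].
  under eq_bigr => c _ do rewrite gf_low // ?ltn_ord mulrDl.
  rewrite big_split !sum_pick; try lia; rewrite /=.
  by ifs; ring.
case: ifP => [h2|/negbT h2].
  under eq_bigr => c _ do rewrite gf_high // ?ltn_ord mulrDl.
  rewrite big_split !sum_pick; try lia; rewrite /=.
  by ifs; ring.
by rewrite big1 // => c _; rewrite gf_mid // mul0r.
Qed.

Lemma mulG_l p (M : 'M[F]_(N, p)) (a : 'I_N) (b : 'I_p) : (G *m M) a b =
  if (a < n)%N then M @ (n.-1 - a)%N b - (if (0 < a)%N then M @ (n - a)%N b else 0)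
  else if (n < a)%N then (if (a < n.*2)%N then M @ (3 * n - a)%N b else 0) - M @ ((3 * n).+1 - a)%N b
  else 0.
Proof.
rewrite mxE; under eq_bigr => c _ do rewrite mxE.
exact: (gsum (fun c => M c b) (ltn_ord a)).
Qed.

Lemma mulG_r p (M : 'M[F]_(p, N)) (a : 'I_p) (b : 'I_N) : (M *m G) a b =
  if (b < n)%N then M a @ (n.-1 - b)%N - (if (0 < b)%N then M a @ (n - b)%N else 0)
  else if (n < b)%N then (if (b < n.*2)%N then M a @ (3 * n - b)%N else 0) - M a @ ((3 * n).+1 - b)%N
  else 0.
Proof.
rewrite mxE; under eq_bigr => c _ do rewrite mxE gf_sym mulrC.
exact: (gsum (fun c => M a c) (ltn_ord b)).
Qed.

Definition sf (a b : nat) : F :=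
  (if (a + b < n)%N then 1 else 0) - (if (3 * n < a + b)%N then 1 else 0).
Definition S : 'M[F]_N := \matrix_(a, b) sf a b.
Definition E : 'M[F]_N := \matrix_(a, b) (if (a == b :> nat) && (a != n :> nat) then 1 else 0).

Lemma GS : G *m S = E.
Proof.
apply/matrixP => a c; rewrite mulG_l !mxE /sf.
have := ltn_ord a; have := ltn_ord c.
move=> *; solveG.
Qed.

Lemma SG : S *m G = E.
Proof.
apply/matrixP => a c; rewrite mulG_r !mxE /sf.
have := ltn_ord a; have := ltn_ord c.
move=> *; solveG.
Qed.


Definition sh (M : 'M[F]_N) : 'M[F]_N := \matrix_(a, b) M (rev_ord b) (rev_ord a).

Lemma shK M : sh (sh M) = M.
Proof. by apply/matrixP => a b; rewrite !mxE !rev_ordK. Qed.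

Lemma shM M P : sh (M *m P) = sh P *m sh M.
Proof.
apply/matrixP => a b; rewrite !mxE (reindex_inj rev_ord_inj) /=.
by apply: eq_bigr => c _; rewrite !mxE mulrC.
Qed.

Lemma shB M P : sh (M - P) = sh M - sh P.
Proof. by apply/matrixP => a b; rewrite !mxE. Qed.

Lemma shN M : sh (- M) = - sh M.
Proof. by apply/matrixP => a b; rewrite !mxE. Qed.

Lemma sh_tr M : \tr (sh M) = \tr M.
Proof.
rewrite /mxtrace (reindex_inj rev_ord_inj) /=.
by apply: eq_bigr => c _; rewrite !mxE rev_ordK.
Qed.

Lemma in_soE X : in_so X <-> sh X = - X.
Proof.
split => [h|h].
  by apply/matrixP => a b; rewrite !mxE h !rev_ordK.
move=> i j; have /matrixP/(_ (rev_ord j) (rev_ord i)) := h.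
by rewrite !mxE !rev_ordK => ->.
Qed.

Lemma shG : sh G = - G.
Proof.
apply/matrixP => a b; rewrite !mxE /gf /=.
have := ltn_ord a; have := ltn_ord b; move=> *; ifs; first [lia | ring].
Qed.

Lemma shS : sh S = - S.
Proof.
apply/matrixP => a b; rewrite !mxE /sf /=.
have := ltn_ord a; have := ltn_ord b; move=> *; ifs; first [lia | ring].
Qed.

Definition Amx : 'M[F]_N := \matrix_(a, b) (if (a + b < n)%N then 1 else 0).

Lemma S_A : S = Amx - sh Amx.
Proof.
apply/matrixP => a b; rewrite !mxE /sf /=.
have := ltn_ord a; have := ltn_ord b; move=> *; ifs; first [lia | ring].
Qed.

Lemma Fn_tr (Z : 'M[F]_N) : Fn Z = \tr (Amx *m Z).
Proof.
rewrite /Fn /mxtrace; under [RHS]eq_bigr do rewrite mxE.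
under [RHS]eq_bigr do under eq_bigr do rewrite mxE.
rewrite exchange_big; apply: eq_bigr => i _; rewrite big_mkcond.
by apply: eq_bigr => j _; rewrite addnC; case: ifP => _; rewrite ?mul1r ?mul0r.
Qed.

Lemma tr_delta (Z : 'M[F]_N) (i j : 'I_N) : \tr (Z *m delta_mx i j) = Z j i.
Proof.
rewrite /mxtrace (bigD1 j) //= big1 ?addr0.
  rewrite mxE (bigD1 i) //= big1 ?addr0; first by rewrite mxE !eqxx mulr1.
  by move=> c hc; rewrite mxE (negbTE hc) mulr0.
move=> a ha; rewrite mxE big1 // => c _; rewrite mxE.
by case: eqP; rewrite ?mulr0 //= => _; rewrite (negbTE ha) mulr0.
Qed.


Lemma swap4 (a b c d : 'M[F]_N) : a - b - (- d + c) = a - c - (b - d).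
Proof. by apply/matrixP => i j; rewrite !mxE; ring. Qed.

Lemma Fn_lie X Y : Fn (lie X Y) = \tr ((Amx *m X - X *m Amx) *m Y).
Proof.
rewrite Fn_tr /lie mulmxBr linearB /= mulmxBl linearB /= -!mulmxA.
congr (_ - _).
by rewrite mulmxA mxtrace_mulC.
Qed.

Hypothesis two : (2 : F) != 0.

Lemma trZ Z : (forall Y, sh Y = - Y -> \tr (Z *m Y) = 0) <-> sh Z = Z.
Proof.
split => [h|h Y hY].
  apply/matrixP => c d.
  have hY : sh (delta_mx d c - sh (delta_mx d c)) = - (delta_mx d c - sh (delta_mx d c)).
    by rewrite shB shK opprB.
  have := h _ hY; rewrite mulmxBr linearB /= tr_delta.
  have -> : Z *m sh (delta_mx d c) = sh (delta_mx d c *m sh Z) by rewrite shM shK.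
  rewrite sh_tr mxtrace_mulC tr_delta => /eqP; rewrite subr_eq0 => /eqP.
  by rewrite mxE.
have e : \tr (Z *m Y) = - \tr (Z *m Y).
  by rewrite -{1}sh_tr shM h hY mulNmx linearN /= mxtrace_mulC.
have : 2 * \tr (Z *m Y) = 0 by rewrite mulr2n mulrDl mul1r {1}e addNr.
by move/eqP; rewrite mulf_eq0 (negbTE two) /= => /eqP.
Qed.

Lemma swap4' (a b c d : 'M[F]_N) : a - c - (b - d) = (a - b) - (- d - - c).
Proof. by apply/matrixP => i j; rewrite !mxE; ring. Qed.

Lemma ker_iff X : in_kirillov_ker (@Fn F n) X <-> in_so X /\ S *m X = X *m S.
Proof.
rewrite /in_kirillov_ker in_soE.
split => [[hX hY]|[hX hS]].
  split => //.
  have : sh (Amx *m X - X *m Amx) = Amx *m X - X *m Amx.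
    by apply/trZ => Y /in_soE hy; rewrite -Fn_lie; apply: hY.
  rewrite shB !shM hX mulNmx mulmxN => e.
  apply/eqP; rewrite -subr_eq0 S_A mulmxBl mulmxBr swap4' -e subrr //.
split => //.
have : forall Y, sh Y = - Y -> \tr ((Amx *m X - X *m Amx) *m Y) = 0.
  apply/trZ; rewrite shB !shM hX mulNmx mulmxN.
  apply/eqP; rewrite eq_sym -subr_eq0 -swap4' -mulmxBl -mulmxBr -S_A hS subrr //.
by move=> h Y /in_soE hy; rewrite Fn_lie h.
Qed.


Definition Q : 'M[F]_N := G *m G.

Definition vat (v : 'cV[F]_N) (m : nat) := v (inord m) 0.

Lemma Qv_low (v : 'cV[F]_N) (a : 'I_N) : (a < n)%N ->
  (Q *m v) a 0 = vat v a - (if (a.+1 < n)%N then vat v a.+1 else 0)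
                 - (if (0 < a)%N then vat v a.-1 - vat v a else 0).
Proof.
move=> ha; rewrite /Q -mulmxA mulG_l ha !mulG_l !inordK; try lia.
have -> : (n.-1 - (n.-1 - a) = a)%N by lia.
have -> : (n - (n - a) = a)%N by lia.
rewrite /vat; ifs; try lia.
- have -> : (n - (n.-1 - a) = a.+1)%N by lia.
  have -> : (n.-1 - (n - a) = a.-1)%N by lia.
  by [].
- have -> : (n - (n.-1 - a) = a.+1)%N by lia.
  by [].
- have -> : (n.-1 - (n - a) = a.-1)%N by lia.
  by [].
- by [].
Qed.


Definition supp (v : 'cV[F]_N) (k : nat) := forall a : 'I_N, (k < a)%N -> v a 0 = 0.

Lemma vat0 v k m : supp v k -> (k < m)%N -> (m < N)%N -> v (inord m) 0 = 0.
Proof. by move=> hv h1 h2; rewrite hv // inordK. Qed.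

Lemma Gv_L (v : 'cV[F]_N) : supp v n.-1 -> supp (G *m v) n.-1.
Proof.
move=> hv a ha; rewrite mulG_l.
case: ifP => h1; first lia.
case: ifP => h2 //.
have := ltn_ord a; case: ifP => h3 ? ; rewrite !(vat0 hv) //; try lia; by rewrite subrr.
Qed.

Lemma Qv_L (v : 'cV[F]_N) : supp v n.-1 -> supp (Q *m v) n.-1.
Proof. by move=> hv; rewrite /Q -mulmxA; apply/Gv_L/Gv_L. Qed.

Definition e0 : 'cV[F]_N := delta_mx ord0 0.

Lemma tri k : (k < n)%N -> supp (Q ^+ k *m e0) k /\ vat (Q ^+ k *m e0) k = (-1) ^+ k.
Proof.
elim: k => [_|k IH hk].
  rewrite expr0 mul1mx; split.
    by move=> a ha; rewrite mxE; case: eqP => // e; rewrite e in ha.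
  have e : inord 0 = ord0 :> 'I_N by apply: val_inj; rewrite /= inordK.
  by rewrite /vat mxE e !eqxx expr0.
have [hs hv] := IH (ltnW hk).
set v := Q ^+ k *m e0 in hs hv *.
have -> : Q ^+ k.+1 *m e0 = Q *m v by rewrite exprS -mulmxE mulmxA.
have hsL : supp v n.-1 by move=> a ha; apply: hs; lia.
split.
  move=> a ha; case: (ltnP a n) => h.
    rewrite Qv_low // /vat !(vat0 hs); try lia.
    by ifs; rewrite ?subrr ?subr0.
  by apply: (Qv_L hsL); lia.
rewrite /vat Qv_low inordK; try lia.
rewrite /vat (vat0 hs) //; try lia.
rewrite /= -/(vat v k) hv; case: ifP => _; rewrite ?(vat0 hs); try lia.
all: by rewrite exprS mulN1r; ring.
Qed.


Lemma cyc m : (m <= n)%N -> forall u : 'cV[F]_N,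
  (forall a : 'I_N, (m <= a)%N -> u a 0 = 0) ->
  exists c : nat -> F, u = \sum_(k < m) c k *: (Q ^+ k *m e0).
Proof.
elim: m => [_ u hu|m IH hm u hu].
  exists (fun _ => 0); rewrite big_ord0.
  by apply/matrixP => a b; rewrite ord1 mxE hu.
have [hs hv] := tri hm.
set w := Q ^+ m *m e0 in hs hv *.
set s := u (inord m) 0 * (-1) ^+ m.
have hu' : forall a : 'I_N, (m <= a)%N -> (u - s *: w) a 0 = 0.
  move=> a ha; have -> : (u - s *: w) a 0 = u a 0 - s * w a 0 by rewrite !mxE.
  case: (ltnP m a) => h.
    by rewrite hu ?hs // ?mulr0 ?subr0 //; lia.
  have e : a = inord m by apply: val_inj; rewrite /= inordK; lia.
  move: hv; rewrite /vat -e => ->.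
  by rewrite /s -mulrA -expr2 -exprM mulnC exprM sqrrN !expr1n mulr1 e subrr.
have [c hc] := IH (ltnW hm) _ hu'.
exists (fun k => if k == m then s else c k).
rewrite big_ord_recr /= eqxx.
have -> : \sum_(i < m) (if (i : nat) == m then s else c i) *: (Q ^+ i *m e0)
        = \sum_(i < m) c i *: (Q ^+ i *m e0).
  by apply: eq_bigr => i _; rewrite ltn_eqF.
by rewrite -hc subrK.
Qed.

Lemma indep m : (m <= n)%N -> forall c : nat -> F,
  \sum_(k < m) c k *: (Q ^+ k *m e0) = 0 -> forall k, (k < m)%N -> c k = 0.
Proof.
elim: m => [_ c _ k //|m IH hm c hc k hk].
have [hs hv] := tri hm.
move: hc; rewrite big_ord_recr /= => hc.
have cm : c m = 0.
  have /matrixP/(_ (inord m) 0) := hc.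
  rewrite mxE summxE big1.
    have -> : (c m *: (Q ^+ m *m e0)) (inord m) 0 = c m * vat (Q ^+ m *m e0) m by rewrite mxE.
    rewrite mxE add0r hv => /eqP; rewrite mulf_eq0 expf_eq0 oppr_eq0 oner_eq0 andbF orbF.
    by move/eqP.
  move=> i _; rewrite mxE.
  have [hs' _] := tri (ltn_trans (ltn_ord i) hm).
  by rewrite hs' ?mulr0 // inordK //; lia.
move: hc; rewrite cm scale0r addr0 => hc.
case: (ltnP k m) => h; first exact: (IH (ltnW hm)).
by have -> : k = m by lia.
Qed.


Lemma commQ (M : 'M[F]_N) k : M *m Q = Q *m M -> M *m Q ^+ k = Q ^+ k *m M.
Proof.
move=> h; rewrite !mulmxE; apply: commrX.
by rewrite /GRing.comm -!mulmxE h.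
Qed.

Lemma kill (M : 'M[F]_N) : M *m Q = Q *m M -> (forall a, M a 0 = 0) ->
  forall a b : 'I_N, (b < n)%N -> M a b = 0.
Proof.
move=> hQ h0 a b hb.
have hMe0 : M *m e0 = 0 by apply/matrixP => i j; rewrite -colE !mxE h0.
have hu : forall i : 'I_N, (n <= i)%N -> (delta_mx b 0 : 'cV[F]_N) i 0 = 0.
  move=> i hi; rewrite mxE; case: eqP => //= e; rewrite -e in hb; lia.
have [c hc] := cyc (leqnn n) hu.
have <- : (M *m (delta_mx b 0 : 'cV[F]_N)) a 0 = M a b by rewrite -colE mxE.
rewrite hc mulmx_sumr summxE big1 // => k _.
by rewrite -scalemxAr mulmxA commQ // -mulmxA hMe0 mulmx0 scaler0 mxE.
Qed.


Definition J : 'M[F]_N := \matrix_(a, b) (if b == rev_ord a then 1 else 0).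
Definition PL : 'M[F]_N := \matrix_(a, b) (if (a == b) && (a < n)%N then 1 else 0).

Lemma mulJ_l (M : 'M[F]_N) a b : (J *m M) a b = M (rev_ord a) b.
Proof.
rewrite mxE (bigD1 (rev_ord a)) //= big1 ?addr0; first by rewrite mxE eqxx mul1r.
by move=> c hc; rewrite mxE (negbTE hc) mul0r.
Qed.

Lemma mulJ_r (M : 'M[F]_N) a b : (M *m J) a b = M a (rev_ord b).
Proof.
rewrite mxE (bigD1 (rev_ord b)) //= big1 ?addr0; first by rewrite mxE rev_ordK eqxx mulr1.
move=> c hc; rewrite mxE; case: eqP; rewrite ?mulr0 // => e.
by case/eqP: hc; rewrite e rev_ordK.
Qed.

Lemma mulPL_l (M : 'M[F]_N) (a b : 'I_N) : (PL *m M) a b = if (a < n)%N then M a b else 0.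
Proof.
rewrite mxE (bigD1 a) //= big1 ?addr0; first by rewrite mxE eqxx /=; case: ifP; rewrite ?mul1r ?mul0r.
by move=> c hc; rewrite mxE eq_sym (negbTE hc) mul0r.
Qed.

Lemma mulPL_r (M : 'M[F]_N) (a b : 'I_N) : (M *m PL) a b = if (b < n)%N then M a b else 0.
Proof.
rewrite mxE (bigD1 b) //= big1 ?addr0; first by rewrite mxE eqxx /=; case: ifP; rewrite ?mulr1 ?mulr0.
by move=> c hc; rewrite mxE (negbTE hc) mulr0.
Qed.

Lemma GJ : G *m J = - (J *m G).
Proof.
apply/matrixP => a b; rewrite mulJ_r [RHS]mxE mulJ_l !mxE /gf /=.
have := ltn_ord a; have := ltn_ord b; move=> *; ifs; first [lia | ring].
Qed.

Lemma GPL : G *m PL = PL *m G.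
Proof.
apply/matrixP => a b; rewrite mulPL_r mulPL_l !mxE /gf /=.
have := ltn_ord a; have := ltn_ord b; move=> *; ifs; first [lia | ring].
Qed.


Lemma mule0 (M : 'M[F]_N) a : (M *m e0) a 0 = M a 0.
Proof. by rewrite -colE mxE. Qed.

Lemma GQ : G *m Q = Q *m G.
Proof. by rewrite /Q mulmxA. Qed.

Lemma Wlemma X : G *m X = X *m G -> forall a b : 'I_N, (n < a)%N -> (b < n)%N -> X a b = 0.
Proof.
move=> hX.
set W := PL *m J *m X *m PL.
have hGW : G *m W = - (W *m G).
  have e1 : G *m W = PL *m (G *m J) *m X *m PL by rewrite /W !mulmxA GPL.
  rewrite e1 GJ mulmxN !mulNmx; congr (- _).
  have -> : PL *m (J *m G) *m X *m PL = PL *m J *m (G *m X) *m PL by rewrite !mulmxA.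
  rewrite hX.
  have -> : PL *m J *m (X *m G) *m PL = PL *m J *m X *m (G *m PL) by rewrite !mulmxA.
  by rewrite GPL /W !mulmxA.
have hQW : Q *m W = W *m Q.
  by rewrite /Q -[LHS]mulmxA hGW mulmxN [in LHS]mulmxA hGW mulNmx opprK mulmxA.
have hu : forall a : 'I_N, (n <= a)%N -> (W *m e0) a 0 = 0.
  by move=> a ha; rewrite mule0 /W mulPL_r hn -mulmxA mulPL_l ltnNge ha.
have [c hc] := cyc (leqnn n) hu.
set P := \sum_(k < n) c k *: Q ^+ k.
have hPe0 : P *m e0 = W *m e0.
  by rewrite hc /P mulmx_suml; apply: eq_bigr => k _; rewrite scalemxAl.
have hPQ : P *m Q = Q *m P.
  rewrite /P mulmx_suml mulmx_sumr; apply: eq_bigr => k _.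
  by rewrite -scalemxAl -scalemxAr !mulmxE -exprSr -exprS.
have hPG : P *m G = G *m P.
  rewrite /P mulmx_suml mulmx_sumr; apply: eq_bigr => k _.
  rewrite -scalemxAl -scalemxAr; congr (_ *: _).
  by rewrite !mulmxE; apply/esym/commrX; rewrite /GRing.comm -!mulmxE GQ.
have hWP : forall a b : 'I_N, (b < n)%N -> W a b = P a b.
  move=> a b hb; apply/eqP; rewrite -subr_eq0; apply/eqP.
  have -> : W a b - P a b = (W - P) a b by rewrite !mxE.
  apply: kill hb.
    by rewrite mulmxBl mulmxBr hPQ hQW.
  by move=> i; rewrite -mule0 mulmxBl hPe0 subrr mxE.
have hWG : forall a b : 'I_N, (a < n)%N -> (b < n)%N -> (W *m G) a b = 0.
  move=> a b ha hb.
  have e1 : (W *m G) a b = (P *m G) a b.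
    rewrite !mxE; apply: eq_bigr => i _; case: (ltnP i n) => hi.
      by rewrite hWP.
    have hG0 : G i b = 0.
      by rewrite mxE /gf; have := ltn_ord i; move=> *; ifs; first [lia|done].
    by rewrite hG0 !mulr0.
  have e3 : (G *m P) a b = (G *m W) a b.
    by rewrite !mxE; apply: eq_bigr => i _; rewrite hWP.
  have : (W *m G) a b = - (W *m G) a b.
    by rewrite {1}e1 hPG e3 hGW mxE.
  move=> h; have : 2 * (W *m G) a b = 0 by rewrite mulr2n mulrDl mul1r {1}h addNr.
  by move/eqP; rewrite mulf_eq0 (negbTE two) /= => /eqP.
have hW0 : forall a : 'I_N, (a < n)%N -> forall j, (j < n)%N -> W a (inord (n.-1 - j)) = 0.
  move=> a ha; elim=> [_|j IH hj].
    have := hWG a (inord 0) ha; rewrite mulG_r !inordK //; try lia.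
    by rewrite hn /= subr0 subn0 => ->.
  have := hWG a (inord j.+1) ha; rewrite mulG_r !inordK //; try lia.
  rewrite hj.
  have -> : (n - j.+1 = n.-1 - j)%N by lia.
  rewrite IH; try lia.
  by rewrite /= subr0 => ->.
move=> x b hx hb.
have ha : (rev_ord x < n)%N by rewrite /=; have := ltn_ord x; lia.
have := hW0 _ ha (n.-1 - b)%N (ltac:(lia)).
have -> : inord (n.-1 - (n.-1 - b)) = b :> 'I_N by apply: val_inj; rewrite /= inordK; lia.
rewrite /W mulPL_r hb -mulmxA mulPL_l ha mulJ_l rev_ordK.
by [].
Qed.


Definition mid : 'I_N := inord n.

Lemma rev_mid : rev_ord mid = mid.
Proof. by apply: val_inj; rewrite /= inordK; lia. Qed.

Lemma mid_eq (a : 'I_N) : (a : nat) = n -> a = mid.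
Proof. by move=> e; apply: val_inj; rewrite /= inordK; lia. Qed.

Lemma EX p (M : 'M[F]_(N, p)) a b : (E *m M) a b = if (a != n :> nat) then M a b else 0.
Proof.
rewrite mxE (bigD1 a) //= big1 ?addr0.
  by rewrite mxE eqxx /=; case: ifP; rewrite ?mul1r ?mul0r.
by move=> c hc; rewrite mxE (_ : (a == c :> nat) = false) ?mul0r //; apply/negbTE; rewrite eq_sym.
Qed.

Lemma XE (M : 'M[F]_N) a b : (M *m E) a b = if (b != n :> nat) then M a b else 0.
Proof.
rewrite mxE (bigD1 b) //= big1 ?addr0.
  by rewrite mxE eqxx /=; case: ifP; rewrite ?mulr1 ?mulr0.
by move=> c hc; rewrite mxE (_ : (c == b :> nat) = false) ?mulr0 //; apply/negbTE.
Qed.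

Lemma xx0 (x : F) : x = - x -> x = 0.
Proof.
move=> h; have : 2 * x = 0 by rewrite mulr2n mulrDl mul1r {1}h addNr.
by move/eqP; rewrite mulf_eq0 (negbTE two) /= => /eqP.
Qed.

Lemma colmid X : in_so X -> S *m X = X *m S -> forall a, X a mid = 0.
Proof.
move=> hso hS a.
have hXS : forall c, (X *m S) c mid = 0.
  move=> c; rewrite mxE big1 // => i _; rewrite mxE /sf inordK; last lia.
  have := ltn_ord i; move=> *; ifs; try lia; ring.
have : (E *m X) a mid = 0.
  rewrite -GS -mulmxA hS mxE big1 // => i _; by rewrite hXS mulr0.
rewrite EX; case: ifP => // /negbT; rewrite negbK => /eqP /mid_eq -> _.
by apply: xx0; rewrite {1}hso rev_mid.
Qed.

Lemma rowmid X : in_so X -> S *m X = X *m S -> forall b, X mid b = 0.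
Proof.
move=> hso hS b; rewrite hso rev_mid colmid //; exact: oppr0.
Qed.

Lemma trG : G^T = G.
Proof. by apply/matrixP => a b; rewrite !mxE gf_sym. Qed.

Lemma GX X : in_so X -> S *m X = X *m S -> G *m X = X *m G.
Proof.
move=> hso hS.
have hEX : E *m X = X.
  apply/matrixP => a b; rewrite EX; case: ifP => // /negbT; rewrite negbK => /eqP /mid_eq ->.
  by rewrite rowmid.
have hXE : X *m E = X.
  apply/matrixP => a b; rewrite XE; case: ifP => // /negbT; rewrite negbK => /eqP /mid_eq ->.
  by rewrite colmid.
rewrite -{1}hXE -SG !mulmxA -(mulmxA G X S) -hS mulmxA GS hEX //.
Qed.

Lemma inj X : in_so X -> S *m X = X *m S ->
  (forall a : 'I_N, (a < n)%N -> X a 0 = 0) -> X = 0.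
Proof.
move=> hso hS h.
have hG := GX hso hS.
have hQ : X *m Q = Q *m X.
  by rewrite /Q [LHS]mulmxA -hG -[LHS]mulmxA -hG mulmxA.
have h0 : forall a, X a 0 = 0.
  move=> a; case: (ltngtP a n) => ha; first exact: h.
    exact: Wlemma.
  by rewrite (mid_eq ha) rowmid.
have hL := kill hQ h0.
apply/matrixP => a b; rewrite mxE.
case: (ltngtP b n) => hb; first exact: hL.
  case: (ltngtP a n) => ha.
  - have hT : G *m X^T = X^T *m G by rewrite -{1}trG -trmx_mul -hG trmx_mul trG.
    by have := Wlemma hT hb ha; rewrite mxE.
  - rewrite hso hL ?oppr0 //=; have := ltn_ord a; lia.
  - by rewrite (mid_eq ha) rowmid.
by rewrite (mid_eq hb) colmid.
Qed.


Definition good X := in_so X /\ S *m X = X *m S.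

Lemma good0 : good 0.
Proof. by split; [move=> i j; rewrite !mxE oppr0 | rewrite mulmx0 mul0mx]. Qed.

Lemma goodD X Y : good X -> good Y -> good (X + Y).
Proof.
move=> [h1 h2] [h3 h4]; split.
  by move=> i j; rewrite !mxE h1 h3 opprD.
by rewrite mulmxDr mulmxDl h2 h4.
Qed.

Lemma goodZ c X : good X -> good (c *: X).
Proof.
move=> [h1 h2]; split.
  by move=> i j; rewrite !mxE h1 mulrN.
by rewrite -scalemxAr h2 scalemxAl.
Qed.

Lemma sh1 : sh 1%:M = 1%:M.
Proof. by apply/matrixP => a b; rewrite !mxE (inj_eq rev_ord_inj) eq_sym. Qed.

Lemma shX M k : sh (M ^+ k) = (sh M) ^+ k.
Proof.
elim: k => [|k IH]; first by rewrite !expr0 sh1.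
by rewrite exprS -mulmxE shM IH mulmxE -exprSr.
Qed.

Lemma GkE k : G ^+ (k.*2.+1) = G *m Q ^+ k.
Proof. by rewrite exprS -[k.*2]mul2n exprM /Q mulmxE expr2. Qed.

Lemma good_G k : good (G ^+ (k.*2.+1)).
Proof.
split.
  apply/in_soE; rewrite shX shG.
  by rewrite exprNn -signr_odd /= odd_double /= expr1 mulN1r.
rewrite !mulmxE; apply: commrX.
by rewrite /GRing.comm -!mulmxE SG GS.
Qed.

Lemma suppL (c : nat -> F) : forall a : 'I_N, (n <= a)%N ->
  (\sum_(k < n) c k *: (Q ^+ k *m e0)) a 0 = 0.
Proof.
move=> a ha; rewrite summxE big1 // => k _; rewrite mxE.
have [hs _] := tri (ltn_ord k).
by rewrite hs ?mulr0 //; have := ltn_ord k; lia.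
Qed.

Lemma E_L (v : 'cV[F]_N) : (forall a : 'I_N, (n <= a)%N -> v a 0 = 0) -> E *m v = v.
Proof.
move=> hv; apply/matrixP => a b; rewrite ord1 EX; case: ifP => // /negbT; rewrite negbK => /eqP e.
by rewrite hv ?e.
Qed.


Definition T : n.-tuple 'M[F]_N := [tuple G ^+ ((i : nat).*2.+1) | i < n].

Lemma T_nth (i : 'I_n) : T`_i = G ^+ ((i : nat).*2.+1).
Proof. by rewrite /T nth_mktuple. Qed.

Lemma good_sum (I : finType) (P : pred I) (f : I -> 'M[F]_N) :
  (forall i, P i -> good (f i)) -> good (\sum_(i | P i) f i).
Proof. by move=> h; apply: big_ind => //; [exact: good0 | exact: goodD]. Qed.

Lemma mainF : exists V : {vspace 'M[F]_N},
  (forall X, X \in V <-> in_kirillov_ker (@Fn F n) X) /\ \dim V = n.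
Proof.
exists <<T>>%VS; split.
  move=> X; rewrite ker_iff; split.
    move/coord_span => ->; apply: good_sum => i _; apply: goodZ; rewrite T_nth.
    exact: good_G.
  move=> hX.
  set u : 'cV[F]_N := \col_a (if (a < n)%N then X a 0 else 0).
  have hu : forall a : 'I_N, (n <= a)%N -> (S *m u) a 0 = 0.
    move=> a ha; rewrite mxE big1 // => b _; rewrite !mxE /sf.
    have := ltn_ord a; have := ltn_ord b; move=> *; ifs; try lia; ring.
  have [c hc] := cyc (leqnn n) hu.
  set Y := \sum_(k < n) c k *: G ^+ ((k : nat).*2.+1).
  have hY : Y *m e0 = u.
    rewrite /Y mulmx_suml.
    have -> : \sum_(i < n) c i *: G ^+ ((i : nat).*2.+1) *m e0
            = G *m \sum_(k < n) c k *: (Q ^+ k *m e0).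
      rewrite mulmx_sumr; apply: eq_bigr => k _.
      by rewrite GkE -scalemxAl -scalemxAr mulmxA.
    rewrite -hc mulmxA GS E_L // => a ha; rewrite mxE; case: ifP => //; lia.
  have gY : good Y by apply: good_sum => k _; apply/goodZ/good_G.
  have gXY : good (X - Y) by rewrite -scaleN1r; apply/goodD/goodZ.
  have : X - Y = 0.
    apply: inj; [exact: gXY.1 | exact: gXY.2 |] => a ha.
    have -> : (X - Y) a 0 = X a 0 - Y a 0 by rewrite !mxE.
    by rewrite -(mule0 Y) hY mxE ha subrr.
  move/subr0_eq => ->.
  rewrite /Y; apply: memv_suml => k _; apply: memvZ; rewrite -T_nth.
  by apply: memv_span; apply: mem_nth; rewrite size_tuple.
have hfree : free T.
  apply/freeP => k hk i.
  pose c (j : nat) := if @insub nat (fun x => (x < n)%N) 'I_n j is Some i then k i else 0.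
  have ck : forall i : 'I_n, c i = k i by move=> i'; rewrite /c valK.
  set v := \sum_(j < n) c j *: (Q ^+ j *m e0).
  have hv : v = 0.
    have : G *m v = 0.
      rewrite /v mulmx_sumr -[RHS](mul0mx _ e0) -hk mulmx_suml.
      by apply: eq_bigr => j _; rewrite ck T_nth GkE -scalemxAl -scalemxAr mulmxA.
    move=> h; rewrite /v -(E_L (suppL c)) -SG -mulmxA -/v h mulmx0 //.
  by rewrite -ck (indep (leqnn n) hv).
by move: hfree; rewrite /free size_tuple => /eqP.
Qed.

End Main.

Theorem theorem4p17 (R : realType) (n : nat) (hn : (1 <= n)%N) :
  exists V : {vspace 'M[R[i]]_(n.*2.+1)},
    (forall X : 'M[R[i]]_(n.*2.+1),
        X \in V <-> @in_kirillov_ker R[i] n (@Fn R[i] n) X)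
    /\ \dim V = n.
Proof.
apply: (@mainF R[i] n hn).
by rewrite pnatr_eq0.
Qed.
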